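(* Let $\mathcal L$ be a finite distributive lattice, let $\mathbb F$ be the minimal multigraded free resolution of $H_{\mathcal L}$ and $\widetilde{\mathbb F}$ the minimal multigraded free resolution of $H_{\widetilde{\mathcal L}}$, both in the explicit form described in the context. Then the $S$-linear map $\pi:\sigma(\widetilde{\mathbb F})\to\mathbb F$ given by $\pi(\sigma(\widetilde b(r;T)))=(-1)^{|T|}\,b(r^T;T_r)$ is an isomorphism of complexes.
   Context: Let $P$ be the set of join-irreducible elements of $\mathcal L$ (elements with exactly one lower neighbor); for $p\in\mathcal L$ put $\ell(p)=\{q\in P:q\le p\}$. Let $K$ be a field, $S=K[x_p,y_p:p\in P]$, $u_q=\prod_{p\in\ell(q)}x_p\prod_{p\in P\setminus\ell(q)}y_p$ and $\widetilde u_q=\prod_{p\in P\setminus\ell(q)}x_p\prod_{p\in\ell(q)}y_p$ for $q\in\mathcal L$; $H_{\mathcal L}=(u_q:q\in\mathcal L)$, $H_{\widetilde{\mathcal L}}=(\widetilde u_q:q\in\mathcal L)$. $N(p)$ (resp. $M(p)$) is the set of lower (resp. upper) neighbors of $p$. For $q\in N(p)$, $p\setminus q$ is the unique element of $\ell(p)\setminus\ell(q)$; $p\setminus U=\{p\setminus q:q\in U\}$; for $s\in M(r)$, $s\setminus r$ is the unique element of $\ell(s)\setminus\ell(r)$ and $T\setminus r=\{s\setminus r:s\in T\}$. Fix a total order $<$ on $P$ extending its partial order and let $\lambda(q;U)=|\{u\in U: u<q\}|$. For $q\in\mathcal L$, $U\subseteq\mathcal L$: $q\wedge U=\{q\wedge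 u:u\in U\}$, $q\vee U=\{q\vee u:u\in U\}$. $\mathbb F$: $F_i$ is free with basis $b(p;U)$, $p\in\mathcal L$, $U\subseteq N(p)$, $|U|=i$, of multidegree $\mathrm{lcm}(u_p,u_q:q\in U)$, augmentation $b(p;\emptyset)\mapsto u_p$, differential $\partial(b(p;U))=\sum_{q\in U}(-1)^{\lambda(p\setminus q;\,p\setminus U)}\bigl(y_{p\setminus q}b(p;U\setminus\{q\})-x_{p\setminus q}b(q;q\wedge(U\setminus\{q\}))\bigr)$; this is a minimal multigraded free resolution of $H_{\mathcal L}$. $\widetilde{\mathbb F}$: $\widetilde F_i$ is free with basis $\widetilde b(r;T)$, $r\in\mathcal L$, $T\subseteq M(r)$, $|T|=i$, of multidegree $\mathrm{lcm}(\widetilde u_r,\widetilde u_s:s\in T)$, augmentation $\widetilde b(r;\emptyset)\mapsto\widetilde u_r$, differential $\widetilde\partial(\widetilde b(r;T))=\sum_{s\in T}(-1)^{\lambda(s\setminus r;\,T\setminus r)}\bigl(y_{s\setminus r}\widetilde b(r;T\setminus\{s\})-x_{s\setminus r}\widetilde b(s;s\vee(T\setminus\{s\}))\bigr)$; this is a minimal multigraded free resolution of $H_{\widetilde{\mathcal L}}$. Let $\sigma:S\to S$ be the involution $x_p\mapsto y_p$, $y_p\mapsto x_p$, let ${}^\sigma S$ be $S$ viewed as an $S$-module via $\sigma$, and $\sigma(\widetilde{\mathbb F})=\widetilde{\mathbb F}\otimes_S{}^\sigma S$, with basis $\sigma(\widetilde b(r;T))=\widetilde b(r;T)\otimes1$;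 it is a minimal free resolution of $\sigma(H_{\widetilde{\mathcal L}})=H_{\mathcal L}$. For $r\in\mathcal L$ and $T\subseteq M(r)$, $r^T$ is the join of all elements of $T$ and $T_r$ is the set of lower neighbors of $r^T$ in the interval $[r,r^T]$. *)

(* Defs.v *)
From HB Require Import structures.
From mathcomp Require Import all_boot all_order all_algebra.
From mathcomp Require Import mpoly.
Set Implicit Arguments. Unset Strict Implicit. Unset Printing Implicit Defensive.
Import Order.Theory GRing.Theory.
Local Open Scope order_scope.

Section Defs.
Variables (d : Order.disp_t) (L : finDistrLatticeType d) (K : fieldType).

Definition covered (q p : L) : bool :=
  (q < p) && [forall z : L, ~~ ((q < z) && (z < p))].

Definition lowerN (p : L) : {set L} := [set q | covered q p].
Definition upperN (r : L) : {set L} := [set s | covered r s].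

Definition join_irr (p : L) : bool := #|lowerN p| == 1%N.

Definition PT := {p : L | join_irr p}.
Definition nP := #|{: PT}|.

Definition ell (p : L) : {set L} := [set q | join_irr q && (q <= p)].

(* for q in N(p) (resp. p in M(q)): the unique element of l(p) \ l(q) *)
Definition diffel (p q : L) : L := odflt p [pick z in ell p :\: ell q].

Definition diffset (p : L) (U : {set L}) : {set L} := [set diffel p q | q in U].
Definition diffsetr (T : {set L}) (r : L) : {set L} := [set diffel s r | s in T].

Definition lam (tord : rel L) (q : L) (U : {set L}) : nat :=
  #|[set u in U | tord u q]|.

(* The polynomial ring S = K[x_p, y_p : p in P]: variables x_p are indexed by
   lshift (enum_rank p), variables y_p by rshift (enum_rank p). *)
Definition S := {mpoly K[nP + nP]}.

Definition xv (p : L) : S :=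
  if insub p is Some pp then 'X_(lshift nP (enum_rank (pp : PT))) else 0%R.
Definition yv (p : L) : S :=
  if insub p is Some pp then 'X_(rshift nP (enum_rank (pp : PT))) else 0%R.

Definition swapv (i : 'I_(nP + nP)) : 'I_(nP + nP) :=
  match split i with inl j => rshift nP j | inr j => lshift nP j end.
Definition sigma (f : S) : S :=
  comp_mpoly [tuple ('X_(swapv i) : S) | i < nP + nP] f.

(* Ambient free S-module with basis indexed by all pairs (p, U);
   the modules F_i (resp. sigma(F~)_i) are the submodules spanned by the
   basis vectors b(p;U), U \subset N(p), |U| = i
   (resp. b~(r;T), T \subset M(r), |T| = i). *)
Definition key := (L * {set L})%type.
Definition Amb := {ffun key -> S}.

Definition evec (k : key) : Amb := [ffun j => if j == k then 1%R else 0%R].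
Definition scv (a : S) (v : Amb) : Amb := [ffun j => (a * v j)%R].
Definition mapv (f : S -> S) (v : Amb) : Amb := [ffun j => f (v j)].
Definition lin (f : key -> Amb) (v : Amb) : Amb :=
  [ffun j => (\sum_(k : key) v k * f k j)%R].

Definition validF (i : nat) (k : key) : bool :=
  (k.2 \subset lowerN k.1) && (#|k.2| == i).
Definition validG (i : nat) (k : key) : bool :=
  (k.2 \subset upperN k.1) && (#|k.2| == i).

Definition inF (i : nat) (v : Amb) : bool := [forall k, (v k != 0%R) ==> validF i k].
Definition inG (i : nat) (v : Amb) : bool := [forall k, (v k != 0%R) ==> validG i k].

Definition sgn (n : nat) : S := ((-1) ^+ n)%R.

Definition dF_basis (tord : rel L) (k : key) : Amb :=
  let p := k.1 in let U := k.2 in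
  [ffun j => (\sum_(q in U)
     sgn (lam tord (diffel p q) (diffset p U)) *
     (yv (diffel p q) * evec (p, U :\ q) j
      - xv (diffel p q) * evec (q, [set (q `&` u) | u in U :\ q]) j))%R].

Definition dFt_basis (tord : rel L) (k : key) : Amb :=
  let r := k.1 in let T := k.2 in
  [ffun j => (\sum_(s in T)
     sgn (lam tord (diffel s r) (diffsetr T r)) *
     (yv (diffel s r) * evec (r, T :\ s) j
      - xv (diffel s r) * evec (s, [set (s `|` t) | t in T :\ s]) j))%R].

Definition dF (tord : rel L) : Amb -> Amb := lin (dF_basis tord).
(* differential of sigma(F~) = F~ (x)_S ^sigma S: sigma applied to coefficients *)
Definition dsFt (tord : rel L) : Amb -> Amb := lin (fun k => mapv sigma (dFt_basis tord k)).

(* r^T = join of T (together with r, so that r^{emptyset} = r) *)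
Definition rT (r : L) (T : {set L}) : L := \big[Order.join/r]_(s in T) s.
Definition Tr (r : L) (T : {set L}) : {set L} :=
  [set q | (r <= q) && covered q (rT r T)].

Definition pi_basis (k : key) : Amb :=
  scv (sgn #|k.2|) (evec (rT k.1 k.2, Tr k.1 k.2)).
Definition piF : Amb -> Amb := lin pi_basis.

End Defs.

(* Main.v *)
Require Import Defs.
From HB Require Import structures.
From mathcomp Require Import all_boot all_order all_algebra.
From mathcomp Require Import mpoly.
From mathcomp Require Import ring.
Import Order.Theory GRing.Theory.
Set Implicit Arguments. Unset Strict Implicit. Unset Printing Implicit Defensive.


Section Lat.
Variables (d : Order.disp_t) (L : finDistrLatticeType d).
Local Open Scope order_scope.
Implicit Types (r s t p q x y z : L) (A T U X Y Z : {set L}).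

Lemma coveredP q p : covered q p -> q < p /\ forall z, q < z -> z < p -> False.
Proof. case/andP=> H /forallP H2; split=> // z H3 H4. by move: (H2 z); rewrite H3 H4. Qed.

Lemma cov_between r t y : covered r t -> r <= y -> y <= t -> y = r \/ y = t.
Proof.
move=> /coveredP [rt C] ry yt.
case: (eqVneq y r) => [->|ne]; first by left.
case: (eqVneq y t) => [->|ne2]; first by right.
exfalso; apply: (C y); by rewrite lt_neqAle ?ry ?yt ?andbT // eq_sym.
Qed.

Lemma bigJ_idx r A (F : L -> L) : r <= \big[Order.join/r]_(i in A) F i.
Proof. elim/big_rec: _ => // i y _ H. exact: le_trans H (leUr _ _). Qed.

Lemma bigJ_term_seq r (s : seq L) (P : pred L) (F : L -> L) i :
  i \in s -> P i -> F i <= \big[Order.join/r]_(j <- s | P j) F j.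
Proof.
elim: s => // a s IH; rewrite inE big_cons; case/orP=> [/eqP<-|iS] Pi.
  by rewrite Pi leUl.
case: (P a); last exact: IH.
exact: le_trans (IH iS Pi) (leUr _ _).
Qed.

Lemma bigJ_term r A (F : L -> L) i : i \in A -> F i <= \big[Order.join/r]_(i in A) F i.
Proof. move=> iA; apply: bigJ_term_seq => //; exact: mem_index_enum. Qed.

Lemma bigJ_le r A (F : L -> L) x : r <= x -> (forall i, i \in A -> F i <= x) ->
  \big[Order.join/r]_(i in A) F i <= x.
Proof. move=> rx H; elim/big_rec: _ => // i y Hi Hy; by rewrite leUx H. Qed.

Lemma bigM_idx r A (F : L -> L) : \big[Order.meet/r]_(i in A) F i <= r.
Proof. elim/big_rec: _ => // i y _ H. exact: le_trans (leIr _ _) H. Qed.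

Lemma bigM_term_seq r (s : seq L) (P : pred L) (F : L -> L) i :
  i \in s -> P i -> \big[Order.meet/r]_(j <- s | P j) F j <= F i.
Proof.
elim: s => // a s IH; rewrite inE big_cons; case/orP=> [/eqP<-|iS] Pi.
  by rewrite Pi leIl.
case: (P a); last exact: IH.
exact: le_trans (leIr _ _) (IH iS Pi).
Qed.

Lemma bigM_term r A (F : L -> L) i : i \in A -> \big[Order.meet/r]_(i in A) F i <= F i.
Proof. move=> iA; apply: bigM_term_seq => //; exact: mem_index_enum. Qed.

Lemma bigM_ge r A (F : L -> L) x : x <= r -> (forall i, i \in A -> x <= F i) ->
  x <= \big[Order.meet/r]_(i in A) F i.
Proof. move=> rx H; elim/big_rec: _ => // i y Hi Hy; by rewrite lexI H. Qed.

Lemma meet_bigJ x r A (F : L -> L) :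
  x `&` \big[Order.join/r]_(i in A) F i = \big[Order.join/(x `&` r)]_(i in A) (x `&` F i).
Proof. exact: (big_morph _ (meetUr x) (erefl _)). Qed.

Lemma cov_meet r s t : s \in upperN r -> t \in upperN r -> s != t -> s `&` t = r.
Proof.
rewrite !inE => Hs Ht st.
have [rs Cs] := coveredP Hs; have [rt Ct] := coveredP Ht.
have rst : r <= s `&` t by rewrite lexI !ltW.
have [//|h] := cov_between Hs rst (leIl _ _).
exfalso; apply: (Ct s rs); by rewrite lt_neqAle st -h leIr.
Qed.

Lemma rT_term r X s : s \in X -> s <= rT r X.
Proof. move=> sX; rewrite /rT; by apply: bigJ_term. Qed.

Lemma rT_idx r X : r <= rT r X.
Proof. exact: bigJ_idx. Qed.

Lemma rT_mono r X Y : Y \subset X -> rT r Y <= rT r X.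
Proof.
move=> YX; apply: bigJ_le; first exact: bigJ_idx.
move=> i iY; apply: rT_term; exact: (subsetP YX).
Qed.

Variables (r : L) (T : {set L}) (HT : T \subset upperN r).

Lemma mem_rT Y t : Y \subset T -> t \in T -> (t <= rT r Y) = (t \in Y).
Proof.
move=> YT tT; case tY: (t \in Y); first exact: rT_term.
apply/negbTE/negP => tle.
have tr : t <= r.
  rewrite -(meet_l tle) /rT meet_bigJ; apply: bigJ_le; first exact: leIr.
  move=> i iY; rewrite (@cov_meet r t i) ?(subsetP HT _ tT) ?(subsetP HT _ (subsetP YT _ iY)) //.
  by apply/eqP => ti; rewrite ti iY in tY.
have := subsetP HT t tT; rewrite inE => /coveredP [rt _].
by move: (lt_le_trans rt tr); rewrite ltxx.
Qed.

Lemma decomp x : r <= x -> x <= rT r T -> x = rT r [set t in T | t <= x].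
Proof.
move=> rx xT; apply/le_anti/andP; split; last first.
  by apply: bigJ_le => // i; rewrite inE => /andP [].
rewrite -{1}(meet_l xT) /rT meet_bigJ; apply: bigJ_le.
  exact: le_trans (leIr _ _) (bigJ_idx _ _ _).
move=> i iT; have cri := subsetP HT i iT; rewrite inE in cri.
have rxi : r <= x `&` i by rewrite lexI rx; case/coveredP: cri => /ltW.
have [->|E] := cov_between cri rxi (leIr _ _); first exact: bigJ_idx.
rewrite E; apply: rT_term; rewrite inE iT /=.
by rewrite -E leIl.
Qed.

Lemma rT_inj X Y : X \subset T -> Y \subset T -> rT r X = rT r Y -> X = Y.
Proof.
move=> XT YT E; apply/setP => t.
case tT: (t \in T).
  by rewrite -(mem_rT XT tT) -(mem_rT YT tT) E.
apply/idP/idP => tin; [by rewrite (subsetP XT _ tin) in tT|by rewrite (subsetP YT _ tin) in tT].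
Qed.

Lemma rT_le_T X : X \subset T -> rT r X <= rT r T.
Proof. exact: rT_mono. Qed.

Lemma cover_rT X s : X \subset T -> s \in X -> covered (rT r (X :\ s)) (rT r X).
Proof.
move=> XT sX.
have XsT : X :\ s \subset T by apply: subset_trans XT; apply: subsetDl.
have sT := subsetP XT s sX.
apply/andP; split.
  rewrite lt_neqAle rT_mono ?subsetDl // andbT.
  apply/eqP => E; have := rT_term r sX; rewrite -E (mem_rT XsT sT).
  by rewrite !inE eqxx.
apply/forallP => z; apply/negP => /andP [h1 h2].
have rz : r <= z := le_trans (rT_idx r _) (ltW h1).
have zT : z <= rT r T := le_trans (ltW h2) (rT_le_T XT).
have hz := decomp rz zT.
set Z := [set t in T | t <= z] in hz.
have ZT : Z \subset T by apply/subsetP => t; rewrite inE => /andP [].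
have sub1 : X :\ s \subset Z.
  apply/subsetP => t tX; rewrite inE (subsetP XsT _ tX) /=.
  exact: le_trans (rT_term r tX) (ltW h1).
have sub2 : Z \subset X.
  apply/subsetP => t tZ; have tT := subsetP ZT t tZ.
  rewrite -(mem_rT XT tT); apply: le_trans (ltW h2).
  by move: tZ; rewrite inE => /andP [].
case sZ: (s \in Z).
  have EZ : Z = X.
    apply/eqP; rewrite eqEsubset sub2 /=; apply/subsetP => t tX.
    case: (eqVneq t s) => [->//|ts]; apply: (subsetP sub1); by rewrite !inE ts.
  by move: h2; rewrite hz EZ ltxx.
have EZ : Z = X :\ s.
  apply/eqP; rewrite eqEsubset sub1 andbT; apply/subsetP => t tZ.
  rewrite !inE (subsetP sub2 _ tZ) andbT; apply/eqP => ts; by rewrite -ts tZ in sZ.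
by move: h1; rewrite hz EZ ltxx.
Qed.

Lemma Tr_char : Tr r T = [set rT r (T :\ s) | s in T].
Proof.
apply/setP => q; rewrite inE; apply/andP/imsetP.
  case=> rq cq; have [lt C] := coveredP cq.
  have hq := decomp rq (ltW lt).
  set Z := [set t in T | t <= q] in hq.
  have ZT : Z \subset T by apply/subsetP => t; rewrite inE => /andP [].
  have : ~~ (T \subset Z).
    apply/negP => TZ; have EZ : Z = T by apply/eqP; rewrite eqEsubset ZT TZ.
    by move: lt; rewrite hq EZ ltxx.
  case/subsetPn => s sT sZ; exists s => //.
  have ZTs : Z \subset T :\ s.
    apply/subsetP => t tZ; rewrite !inE (subsetP ZT _ tZ) andbT.
    by apply/eqP => ts; rewrite -ts tZ in sZ.
  have qle : q <= rT r (T :\ s) by rewrite hq; exact: rT_mono.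
  move: qle; rewrite le_eqVlt => /orP [/eqP //|qlt].
  exfalso; apply: (C _ qlt); by case/coveredP: (cover_rT (subxx T) sT).
case=> s sT ->; split; first exact: rT_idx.
exact: cover_rT (subxx T) sT.
Qed.

Lemma phi_inj : {in T &, injective (fun s => rT r (T :\ s))}.
Proof.
move=> s t sT tT /rT_inj E.
have := E (subsetDl _ _) (subsetDl _ _).
move/setP => /(_ s); rewrite !inE eqxx sT andbT /=; by case: eqP.
Qed.

Lemma card_Tr : #|Tr r T| = #|T|.
Proof. by rewrite Tr_char card_in_imset //; exact: phi_inj. Qed.

Lemma Tr_lowerN : Tr r T \subset lowerN (rT r T).
Proof. by apply/subsetP => q; rewrite !inE => /andP []. Qed.

Lemma meet_Tr : \big[Order.meet/rT r T]_(u in Tr r T) u = r.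
Proof.
set x := \big[_/_]_(u in _) u.
have rx : r <= x.
  apply: bigM_ge; first exact: rT_idx.
  by move=> u; rewrite inE => /andP [].
have xT : x <= rT r T by apply: bigM_idx.
rewrite (decomp rx xT).
have -> : [set t in T | t <= x] = set0.
  apply/setP => t; rewrite !inE; apply/negbTE/negP => /andP [tT tx].
  have : t <= rT r (T :\ t).
    apply: le_trans tx _; apply: bigM_term.
    by rewrite Tr_char; apply: imset_f.
  by rewrite (mem_rT (subsetDl _ _) tT) !inE eqxx.
by rewrite /rT big_set0.
Qed.

Lemma upper_Tr : [set s | covered r s && (s <= rT r T)] = T.
Proof.
apply/setP => s; rewrite inE; apply/andP/idP.
  case=> cs sle; have [rs _] := coveredP cs.
  have hs := decomp (ltW rs) sle.
  case: (set_0Vmem [set t in T | t <= s]) => [E|[t]].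
    by move: rs; rewrite hs E /rT big_set0 ltxx.
  rewrite inE => /andP [tT ts].
  have crt := subsetP HT t tT; rewrite inE in crt.
  have [rt _] := coveredP crt.
  have [E|E] := cov_between cs (ltW rt) ts.
    by move: rt; rewrite E ltxx.
  by rewrite -E.
move=> sT; split; last exact: rT_term.
by have := subsetP HT s sT; rewrite inE.
Qed.

Lemma meetJ X Y : X \subset T -> Y \subset T -> rT r X `&` rT r Y = rT r (X :&: Y).
Proof.
move=> XT YT.
have rx : r <= rT r X `&` rT r Y by rewrite lexI !rT_idx.
have xT : rT r X `&` rT r Y <= rT r T := le_trans (leIl _ _) (rT_le_T XT).
rewrite {1}(decomp rx xT); congr (rT r _); apply/setP => t; rewrite !inE.
case tT: (t \in T) => /=.
  by rewrite lexI (mem_rT XT tT) (mem_rT YT tT).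
by case tX: (t \in X) => //; rewrite (subsetP XT _ tX) in tT.
Qed.

End Lat.

Section Chain.
Variables (d : Order.disp_t) (L : finDistrLatticeType d).
Local Open Scope order_scope.
Implicit Types (r s t p q x y z : L) (A X Y Z : {set L}).

Lemma exists_cover a z : a < z -> exists2 c, covered c z & a <= c.
Proof.
move: {2}#|[set y | (a < y) && (y < z)]| (leqnn #|[set y | (a < y) && (y < z)]|) => n.
elim: n a => [|n IH] a Hn az.
  case ca: (covered a z); first by exists a.
  have [w aw wz] : exists2 w, a < w & w < z.
    move: ca; rewrite /covered az /= => /negbT /forallPn [w]; rewrite negbK => /andP [? ?]; by exists w.
  have lt : (#|[set y | ((w < y) && (y < z))%O]| < #|[set y | ((a < y) && (y < z))%O]|)%N.
    apply: proper_card; apply/properP; split.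
      apply/subsetP => y; rewrite !inE => /andP [wy yz]; by rewrite (lt_trans aw wy) yz.
    by exists w; rewrite !inE ?aw ?wz ?ltxx.
  by move: (leq_trans lt Hn).
case ca: (covered a z); first by exists a.
have [w aw wz] : exists2 w, a < w & w < z.
  move: ca; rewrite /covered az /= => /negbT /forallPn [w]; rewrite negbK => /andP [? ?]; by exists w.
have lt : (#|[set y | ((w < y) && (y < z))%O]| < #|[set y | ((a < y) && (y < z))%O]|)%N.
  apply: proper_card; apply/properP; split.
    apply/subsetP => y; rewrite !inE => /andP [wy yz]; by rewrite (lt_trans aw wy) yz.
  by exists w; rewrite !inE ?aw ?wz ?ltxx.
have Hw : (#|[set y | ((w < y) && (y < z))%O]| <= n)%N.
  by rewrite -ltnS; exact: leq_trans lt Hn.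
have [c cc wc] := IH w Hw wz.
by exists c => //; exact: le_trans (ltW aw) wc.
Qed.

Lemma join_irr_split z x y : join_irr z -> x `|` y = z -> x = z \/ y = z.
Proof.
move=> jz E; case: (eqVneq x z) => [->|xz]; first by left.
case: (eqVneq y z) => [->|yz]; first by right.
exfalso.
have xlt : x < z by rewrite lt_neqAle xz -E leUl.
have ylt : y < z by rewrite lt_neqAle yz -E leUr.
have [c Ec] := cards1P jz.
have [c1 cc1 xc1] := exists_cover xlt.
have [c2 cc2 yc2] := exists_cover ylt.
have : c1 \in lowerN z by rewrite inE.
rewrite Ec inE => /eqP e1.
have : c2 \in lowerN z by rewrite inE.
rewrite Ec inE => /eqP e2.
rewrite e1 in cc1 xc1; rewrite e2 in yc2.
have zc : z <= c by rewrite -E leUx xc1 yc2.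
have [lt _] := coveredP cc1.
by move: (le_lt_trans zc lt); rewrite ltxx.
Qed.

Lemma ell_nonempty r s : covered r s -> exists z, z \in ell s :\: ell r.
Proof.
move=> crs; have [rs _] := coveredP crs.
pose A := [set y | (y <= s) && ~~ (y <= r)].
have sA : s \in A by rewrite inE lexx (lt_geF rs).
case: (arg_minnP (fun y => #|[set w | w < y]|) sA) => z zA zmin.
have zA2 : z \in A := zA.
move: zA2; rewrite inE => /andP [zs nzr].
have below : forall c, c < z -> c <= r.
  move=> c cz; apply: contraT => ncr.
  have cA : c \in A by rewrite inE ncr (le_trans (ltW cz) zs).
  have h2 := zmin c cA.
  have h1 : (#|[set w | (w < c)%O]| < #|[set w | (w < z)%O]|)%N.
    apply: proper_card; apply/properP; split.
      apply/subsetP => w; rewrite !inE => wc; exact: lt_trans wc cz.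
    by exists c; rewrite !inE ?cz ?ltxx.
  by move: (leq_trans h1 h2); rewrite ltnn.
have zrz : z `&` r < z.
  rewrite lt_neqAle leIl andbT; apply: contra nzr => /eqP <-; exact: leIr.
have [c cc _] := exists_cover zrz.
have jz : join_irr z.
  apply/cards1P; exists c; apply/setP => c'; rewrite !inE; apply/idP/eqP => [cc'|->//].
  have [lt1 C1] := coveredP cc; have [lt2 C2] := coveredP cc'.
  have c1r := below _ lt1; have c2r := below _ lt2.
  have jr : c `|` c' <= r by rewrite leUx c1r c2r.
  have jz' : c `|` c' < z.
    rewrite lt_neqAle leUx !ltW //= andbT; apply/eqP => E; by move: nzr; rewrite -E jr.
  have e1 : c `|` c' = c.
    move: (leUl c c'); rewrite le_eqVlt => /orP [/eqP E|h]; [by rewrite -E | by case: (C1 _ h jz')].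
  have e2 : c `|` c' = c'.
    move: (leUr c' c); rewrite le_eqVlt => /orP [/eqP E|h]; [by rewrite -E | by case: (C2 _ h jz')].
  by rewrite -e2 e1.
by exists z; rewrite !inE jz zs (negbTE nzr).
Qed.

Variables (r : L) (T : {set L}) (HT : T \subset upperN r).

Lemma subTs s : T :\ s \subset upperN r.
Proof. exact: subset_trans (subsetDl _ _) HT. Qed.

Lemma rs_of s : s \in T -> r < s.
Proof. by move=> sT; have := subsetP HT s sT; rewrite inE => /coveredP []. Qed.

Lemma Tr_Ds s : s \in T ->
  Tr r (T :\ s) = [set rT r (T :\ s) `&` u | u in Tr r T :\ rT r (T :\ s)].
Proof.
move=> sT.
have setid : forall t, (T :\ s) :&: (T :\ t) = (T :\ s) :\ t.
  by move=> t; apply/setP => x; rewrite !inE; case: (x == s); case: (x == t); case: (x \in T).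
rewrite (Tr_char (subTs s)) (Tr_char HT); apply/setP => x; apply/imsetP/imsetP.
  case=> t tTs ->; exists (rT r (T :\ t)).
    have tT : t \in T by move: tTs; rewrite !inE => /andP [].
    rewrite in_setD1; apply/andP; split; last exact: (imset_f (fun s => rT r (T :\ s)) tT).
    apply/negP => /eqP /(phi_inj HT) E.
    by move: tTs; rewrite !inE E ?eqxx.
  by rewrite (meetJ HT) ?subsetDl // setid.
case=> u; rewrite in_setD1 => /andP [une /imsetP [t tT ue]] ->.
exists t.
  rewrite !inE tT andbT; apply/eqP => ts; by rewrite ue ts eqxx in une.
by rewrite ue (meetJ HT) ?subsetDl // setid.
Qed.

Lemma rT_Sp s : s \in T -> rT s [set s `|` t | t in T :\ s] = rT r T.
Proof.
move=> sT; apply/le_anti/andP; split.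
  apply: bigJ_le; first exact: rT_term.
  move=> x /imsetP [t tTs ->]; rewrite leUx rT_term //.
  by apply: rT_term; move: tTs; rewrite !inE => /andP [].
apply: bigJ_le; first exact: le_trans (ltW (rs_of sT)) (rT_idx _ _).
move=> t tT; case: (eqVneq t s) => [->|ts]; first exact: rT_idx.
apply: le_trans (leUr t s) _; apply: rT_term; apply: imset_f; by rewrite !inE ts.
Qed.

Lemma Tr_Sp s : s \in T -> Tr s [set s `|` t | t in T :\ s] = Tr r T :\ rT r (T :\ s).
Proof.
move=> sT; have rs := rs_of sT.
apply/setP => q; rewrite in_setD1 /Tr !inE (rT_Sp sT).
apply/andP/andP.
  case=> sq cq; have rq := le_trans (ltW rs) sq.
  have : q \in Tr r T by rewrite /Tr inE rq.
  rewrite (Tr_char HT) => /imsetP [t tT qe].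
  split; last by rewrite rq.
  apply/eqP => qs; rewrite qs in sq.
  by move: sq; rewrite (mem_rT HT (subsetDl _ _) sT) !inE eqxx.
case=> qne /andP [rq cq].
have : q \in Tr r T by rewrite /Tr inE rq.
rewrite (Tr_char HT) => /imsetP [t tT qe].
split => //; rewrite qe (mem_rT HT (subsetDl _ _) sT) !inE sT andbT.
by apply/eqP => st; rewrite qe st eqxx in qne.
Qed.

Lemma card_Sp s : s \in T -> #|[set s `|` t | t in T :\ s]| = #|T :\ s|.
Proof.
move=> sT; apply: card_in_imset => t t'; rewrite !inE => /andP [ts tT] /andP [t's t'T] E.
case: (eqVneq t t') => // ne; exfalso.
have : t <= s `|` t' by rewrite -E leUr.
move/meet_l; rewrite meetUr (@cov_meet _ _ r t s) ?(subsetP HT) // 1?eq_sym //.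
rewrite (@cov_meet _ _ r t t') ?(subsetP HT) // joinxx => rt.
by move: (rs_of tT); rewrite rt ltxx.
Qed.

Lemma diffel_phi s : s \in T -> diffel (rT r T) (rT r (T :\ s)) = diffel s r.
Proof.
move=> sT; have crs : covered r s by have := subsetP HT s sT; rewrite inE.
have [rs _] := coveredP crs.
set ph := rT r (T :\ s).
have pj : rT r T = ph `|` s.
  apply/le_anti/andP; split.
    apply: bigJ_le; first exact: le_trans (rT_idx r _) (leUl _ _).
    move=> t tT; case: (eqVneq t s) => [->|ts]; first exact: leUr.
    apply: le_trans (leUl _ _); apply: rT_term; by rewrite !inE ts.
  by rewrite leUx rT_mono ?subsetDl // rT_term.
have sm : s `&` ph = r.
  have rsm : r <= s `&` ph by rewrite lexI (ltW rs) rT_idx.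
  have [//|E] := cov_between crs rsm (leIl _ _).
  have : s <= ph by rewrite -E leIr.
  by rewrite (mem_rT HT (subsetDl _ _) sT) !inE eqxx.
have E : ell (rT r T) :\: ell ph = ell s :\: ell r.
  apply/setP => z; rewrite !inE; case jz: (join_irr z) => //=.
  rewrite pj; apply/idP/idP.
    case/andP => nzp zp.
    have : z = (z `&` ph) `|` (z `&` s) by rewrite -meetUr meet_l.
    move/esym/(join_irr_split jz) => [E|E].
      by move: nzp; rewrite -E leIr.
    have zs : z <= s by rewrite -E leIr.
    rewrite zs andbT; apply: contra nzp => zr; exact: le_trans zr (rT_idx _ _).
  case/andP => nzr zs.
  rewrite (le_trans zs (leUr _ _)) andbT.
  apply: contra nzr => zph; by rewrite -sm lexI zs zph.
rewrite /diffel E; case: pickP => [//|none].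
have [z zin] := ell_nonempty crs; by move: (none z); rewrite zin.
Qed.

End Chain.


Section Alg.
Variables (d : Order.disp_t) (L : finDistrLatticeType d) (K : fieldType).
Local Open Scope ring_scope.
Local Notation S := (S L K).
Local Notation key := (key L).

Lemma swapvl (j : 'I_(nP L)) : swapv (lshift (nP L) j) = rshift (nP L) j.
Proof. by rewrite /swapv (unsplitK (inl j : 'I_(nP L) + 'I_(nP L))). Qed.
Lemma swapvr (j : 'I_(nP L)) : swapv (rshift (nP L) j) = lshift (nP L) j.
Proof. by rewrite /swapv (unsplitK (inr j : 'I_(nP L) + 'I_(nP L))). Qed.

Lemma sigmaX i : sigma ('X_i : S) = 'X_(swapv i).
Proof. by rewrite /sigma comp_mpolyXU -tnth_nth tnth_mktuple. Qed.

Lemma sigma_xv (z : L) : sigma (xv K z) = yv K z.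
Proof.
rewrite /xv /yv; case: insub => [pp|] /=; last by rewrite /sigma raddf0.
by rewrite sigmaX swapvl.
Qed.
Lemma sigma_yv (z : L) : sigma (yv K z) = xv K z.
Proof.
rewrite /xv /yv; case: insub => [pp|] /=; last by rewrite /sigma raddf0.
by rewrite sigmaX swapvr.
Qed.

Lemma sigmaD (a b : S) : sigma (a + b) = sigma a + sigma b.
Proof. by rewrite /sigma raddfD. Qed.
Lemma sigmaB (a b : S) : sigma (a - b) = sigma a - sigma b.
Proof. by rewrite /sigma raddfB. Qed.
Lemma sigmaM (a b : S) : sigma (a * b) = sigma a * sigma b.
Proof. by rewrite /sigma rmorphM. Qed.
Lemma sigma_sum (I : finType) (P : pred I) (F : I -> S) :
  sigma (\sum_(i | P i) F i) = \sum_(i | P i) sigma (F i).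
Proof. by rewrite /sigma raddf_sum. Qed.
Lemma sigma_sgn n : sigma (sgn L K n) = sgn L K n.
Proof. by rewrite /sigma /sgn rmorphXn rmorphN1. Qed.
Lemma sigma_ev (a k : key) : sigma (evec K a k) = evec K a k.
Proof. by rewrite /sigma ffunE; case: eqP => _; rewrite ?rmorph1 ?raddf0. Qed.

Lemma sgnS n : sgn L K n.+1 = - sgn L K n.
Proof. by rewrite /sgn exprS mulN1r. Qed.
Lemma sgn_sq n : sgn L K n * sgn L K n = 1.
Proof. by rewrite /sgn -exprMn mulrNN mulr1 expr1n. Qed.
Lemma sgn_neq0 n : sgn L K n != 0.
Proof. by rewrite /sgn expf_neq0 // oppr_eq0 oner_eq0. Qed.

Lemma sum_ev (a : key) (F : key -> S) : \sum_k evec K a k * F k = F a.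
Proof.
rewrite (bigD1 a) //= ffunE eqxx mul1r big1 ?addr0 // => k /negbTE ka.
by rewrite ffunE ka mul0r.
Qed.

Lemma lin_comp (f g : key -> Amb L K) (w : Amb L K) j :
  lin f (lin g w) j = \sum_k w k * (\sum_k' g k k' * f k' j).
Proof.
rewrite ffunE; under eq_bigr do rewrite ffunE big_distrl /=.
rewrite exchange_big; apply: eq_bigr => k _; rewrite big_distrr; apply: eq_bigr => k' _.
by rewrite /= mulrA.
Qed.


Lemma sum_comb (c a b : S) (e1 e2 : key) (F : key -> S) :
  \sum_k (c * (a * evec K e1 k - b * evec K e2 k)) * F k = c * (a * F e1 - b * F e2).
Proof.
have E : forall k, (c * (a * evec K e1 k - b * evec K e2 k)) * F k =
   (c * a) * (evec K e1 k * F k) - (c * b) * (evec K e2 k * F k) by move=> k; ring.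
under eq_bigr do rewrite E.
rewrite sumrB -!big_distrr /= !sum_ev; ring.
Qed.

Lemma sum_Tr (r : L) (T : {set L}) (HT : T \subset upperN r) (F : L -> S) :
  \sum_(q in Tr r T) F q = \sum_(s in T) F (rT r (T :\ s)).
Proof. by rewrite (Tr_char HT) big_imset //; apply: phi_inj. Qed.

Lemma diffset_Tr (r : L) (T : {set L}) (HT : T \subset upperN r) :
  diffset (rT r T) (Tr r T) = diffsetr T r.
Proof.
rewrite /diffset /diffsetr (Tr_char HT) -imset_comp; apply: eq_in_imset => s sT /=.
exact: (diffel_phi HT sT).
Qed.

Lemma ring_helper (a b y x e1 e2 : S) :
  - a * (b * (y * e1 - x * e2)) = b * (x * (a * e2) - y * (a * e1)).
Proof. ring. Qed.

Lemma basis_comm (tord : rel L) (r : L) (T : {set L}) (HT : T \subset upperN r) (j : key) :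
  \sum_k' pi_basis K (r,T) k' * dF_basis K tord k' j =
  \sum_k' (mapv (@sigma _ L K) (dFt_basis K tord (r,T))) k' * pi_basis K k' j.
Proof.
have -> : \sum_k' pi_basis K (r,T) k' * dF_basis K tord k' j =
    sgn L K #|T| * dF_basis K tord (rT r T, Tr r T) j.
  rewrite /pi_basis; under eq_bigr do rewrite ffunE -mulrA.
  by rewrite -big_distrr /= sum_ev.
under eq_bigr do rewrite ffunE ffunE /= sigma_sum big_distrl /=.
rewrite exchange_big /= ffunE /= big_distrr /= (diffset_Tr HT) (sum_Tr HT).
apply: eq_bigr => s sT.
under eq_bigr do rewrite sigmaM sigma_sgn sigmaB !sigmaM sigma_xv sigma_yv !sigma_ev.
rewrite sum_comb (diffel_phi HT sT) /pi_basis !ffunE /= (Tr_Ds HT sT) (rT_Sp HT sT) (Tr_Sp HT sT).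
rewrite (card_Sp HT sT) (cardsD1 s T) sT add1n sgnS.
exact: ring_helper.
Qed.

End Alg.


Section Dual.
Variables (d : Order.disp_t) (L : finDistrLatticeType d).
Local Open Scope order_scope.

Lemma covered_dual (x y : L) : covered (L := L^d) x y = covered y x.
Proof.
rewrite /covered ltEdual; congr andb; apply: eq_forallb => z.
by rewrite !ltEdual andbC.
Qed.

Definition hmap (k : key L) : key L :=
  let r0 := \big[Order.meet/k.1]_(u in k.2) u in
  (r0, [set s | covered r0 s && (s <= k.1)]).

Definition gmap (k : key L) : key L := (rT k.1 k.2, Tr k.1 k.2).

Lemma gmap_validF i k : validG i k -> validF i (gmap k).
Proof.
case: k => r T; rewrite /validG /validF /= => /andP [HT /eqP <-].
by rewrite Tr_lowerN (card_Tr HT) eqxx.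
Qed.

Lemma hg k i : validG i k -> hmap (gmap k) = k.
Proof.
case: k => r T; rewrite /validG => /andP [HT _].
by rewrite /hmap /gmap /= (meet_Tr HT) (upper_Tr HT).
Qed.

Lemma gh k i : validF i k -> validG i (hmap k) /\ gmap (hmap k) = k.
Proof.
case: k => p U; rewrite /validF /= => /andP [HU /eqP <-].
have HU' : U \subset upperN (L := L^d) p.
  apply/subsetP => q qU; have := subsetP HU q qU; rewrite !inE.
  by rewrite covered_dual.
set r0 := \big[Order.meet/p]_(u in U) u.
have TrE : Tr (L := L^d) p U = [set s | covered r0 s && (s <= p)].
  apply/setP => s; rewrite /Tr !inE leEdual covered_dual andbC.
  by [].
have E1 := @meet_Tr _ (L^d) p U HU'; rewrite TrE in E1.
have E2 := @upper_Tr _ (L^d) p U HU'.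
have E3 := @card_Tr _ (L^d) p U HU'; rewrite TrE in E3.
split.
  rewrite /validG /hmap /= E3 eqxx andbT.
  by apply/subsetP => s; rewrite !inE => /andP [].
rewrite /gmap /hmap /=; congr pair; first exact: E1.
rewrite -[RHS]E2; apply/setP => q; rewrite /Tr !inE.
have -> : rT r0 [set s | covered r0 s && (s <= p)] = p by exact: E1.
by rewrite covered_dual leEdual andbC.
Qed.

End Dual.

Section MainProof.
Variables (d : Order.disp_t) (L : finDistrLatticeType d) (K : fieldType).
Local Open Scope ring_scope.

Lemma piF_val (w : Amb L K) j :
  piF w j = \sum_k w k * (sgn L K #|k.2| * (if j == gmap k then 1 else 0)).
Proof. by rewrite ffunE; apply: eq_bigr => k _; rewrite !ffunE. Qed.

End MainProof.

Unset Implicit Arguments.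
Theorem proposition3p6 (d : Order.disp_t) (L : finDistrLatticeType d)
  (K : fieldType) (tord : rel L)
  (tord_irr : forall p : L, join_irr p -> ~~ tord p p)
  (tord_trans : forall p q r : L, join_irr p -> join_irr q -> join_irr r ->
     tord p q -> tord q r -> tord p r)
  (tord_total : forall p q : L, join_irr p -> join_irr q -> p != q ->
     tord p q || tord q p)
  (tord_ext : forall p q : L, join_irr p -> join_irr q ->
     (p < q)%O -> tord p q) :
  (* pi maps sigma(F~)_i into F_i *)
  (forall (i : nat) (w : Amb L K), inG i w -> inF i (piF w)) /\
  (* pi : sigma(F~)_i -> F_i is bijective *)
  (forall (i : nat) (v : Amb L K), inF i v ->
     exists! w : Amb L K, inG i w /\ piF w = v) /\
  (* pi commutes with the differentials *)
  (forall (i : nat) (w : Amb L K), inG i.+1 w ->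
     @dF d L K tord (piF w) = piF (@dsFt d L K tord w)).
Proof.
split.
  move=> i w /forallP Hw; apply/forallP => j; apply/implyP => nz.
  rewrite piF_val in nz.
  case: (pickP (fun k => w k * (sgn L K #|k.2| * (if j == gmap k then 1 else 0)) != 0)%R)
    => [k /= nzk|all0]; last first.
    by move: nz; rewrite big1 ?eqxx // => k _; apply/eqP; move: (all0 k) => /= /negbFE.
  have wk : w k != 0%R by apply: contraNneq nzk => ->; rewrite mul0r.
  have vk := implyP (Hw k) wk.
  have jE : j == gmap k.
    by apply: contraTT nzk => /negbTE ->; rewrite !mulr0 eqxx.
  move/eqP: jE => ->; exact: gmap_validF.
split.
  move=> i v /forallP Hv.
  pose w : Amb L K := [ffun k => if validG i k then sgn L K #|k.2| * v (gmap k) else 0]%R.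
  have piw : piF w = v.
    apply/ffunP => j; rewrite piF_val.
    case vj: (validF i j).
      have [vh gh'] := gh vj.
      rewrite (bigD1 (hmap j)) // big1 ?addr0.
        by rewrite ffunE vh gh' eqxx mulr1 /= addr0 mulrAC sgn_sq mul1r.
      move=> k kne; rewrite ffunE; case vk: (validG i k); last by rewrite mul0r.
      case: eqP => [jE|_]; last by rewrite !mulr0.
      by move: kne; rewrite jE (hg vk) eqxx.
    have -> : v j = 0%R.
      by apply/eqP; apply: contraFT vj => nz; exact: (implyP (Hv j) nz).
    apply: big1 => k _; rewrite ffunE; case vk: (validG i k); last by rewrite mul0r.
    case: eqP => [jE|_]; last by rewrite !mulr0.
    by move: vj; rewrite jE (gmap_validF vk).
  exists w; split.
    split => //; apply/forallP => k; apply/implyP; rewrite ffunE.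
    by case: (validG i k); rewrite ?eqxx.
  move=> w' [/forallP Hw' pw']; apply/ffunP => k; rewrite ffunE.
  case vk: (validG i k); last first.
    apply/esym/eqP; apply: contraFT vk => nz; exact: (implyP (Hw' k) nz).
  rewrite -pw' piF_val (bigD1 k) //= big1 ?addr0.
    by rewrite eqxx mulr1 mulrCA sgn_sq mulr1.
  move=> k' k'ne; case: (eqVneq (w' k') 0%R) => [->|nz]; first by rewrite mul0r.
  have vk' := implyP (Hw' k') nz.
  case: eqP => [E|_]; last by rewrite !mulr0.
  by move: k'ne; rewrite -(hg vk') -E (hg vk) eqxx.
move=> i w Hw; apply/ffunP => j.
rewrite /dF /piF /dsFt !lin_comp; apply: eq_bigr => k _.
case: (eqVneq (w k) 0%R) => [->|nz]; first by rewrite !mul0r.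
have := implyP (forallP Hw k) nz; case: k nz => r T nz /andP [sub _].
congr (_ * _)%R; exact: basis_comm.
Qed.
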